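(* Let $m\in\mathbb{N}$, $A=\langle a\rangle\le\mathrm{Sym}(3)$ with $a=(1\,2\,3)$, $B=(\mathbb{Z}/3\mathbb{Z})^m$, and let $\omega=\omega_0\omega_1\dots$ be a sequence of epimorphisms $\omega_i\colon B\to A$ with $\bigcap_{i\ge k}\ker(\omega_i)=\{1\}$ for all $k\in\mathbb{N}$. Let $g\in G_\omega$ with $|g|_\omega=n\ge 1$, written as $g=\beta_1^{a^{c_1}}\beta_2^{a^{c_2}}\cdots\beta_n^{a^{c_n}}a^{s}$ with $s\in\mathbb{Z}/3\mathbb{Z}$, $\beta\colon\{1,\dots,n\}\to B_\omega$ and $c\colon\{1,\dots,n\}\to\mathbb{Z}/3\mathbb{Z}$. If $g\in\mathcal{I}_\infty^\omega$, then there exists $m_c\in\{1,2,\dots,n\}$ such that for all $k\in\{1,\dots,n-1\}$, $c_{k+1}-c_k=2$ if $k<m_c$ and $c_{k+1}-c_k=1$ if $k\ge m_c$.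
   Context: $T_3$ is the $3$-regular rooted tree; elements of $\mathrm{Sym}(3)$ act as rooted automorphisms $\tau(xw)=\tau(x)w$; for $g$ fixing the first level, $g=(g_1,g_2,g_3)$ lists the restrictions of $g$ to the three subtrees below the root, and every automorphism is uniquely $(g_1,g_2,g_3)\tau$ with $\tau\in\mathrm{Sym}(3)$. For $b\in B_\omega$ and $i\in\mathbb{Z}/3\mathbb{Z}$, $b^{a^i}=a^iba^{-i}$. Let $\sigma$ be the left shift on sequences. Define recursively $\beta_\omega\colon B\to\mathrm{Aut}(T_3)$ by $\beta_\omega(b)=(\omega_0(b),1,\beta_{\sigma(\omega)}(b))$, $B_\omega=\beta_\omega(B)$, $G_\omega=\langle A,B_\omega\rangle$. The word pseudonorm $|\cdot|_\omega$ on $G_\omega$ gives length $0$ to elements of $A$ and length $1$ to nontrivial elements of $B_\omega$ ($|g|_\omega$ = minimal total length of an expression of $g$ as a product of such generators). Incompressible elements: $\mathcal{I}_0^{\sigma^\nu(\omega)}=G_{\sigma^\nu(\omega)}$; $\mathcal{I}_k^{\sigma^\nu(\omega)}$ is the set of $g=(g_1,g_2,g_3)\tau\in G_{\sigma^\nu(\omega)}$ with $g_i\in\mathcal{I}_{k-1}^{\sigma^{\nu+1}(\omega)}$ and $\sum_i|g_i|_{\sigma^{\nu+1}(\omega)}=|g|_{\sigma^\nu(\omega)}$; $\mathcal{I}_\infty^\omega=\bigcap_{k\ge1}\mathcal{I}_k^\omega$. *)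

(* Defs.v *)
From mathcomp Require Import all_boot all_order all_algebra all_fingroup.
From Stdlib Require Import ClassicalEpsilon.
Set Implicit Arguments. Unset Strict Implicit. Unset Printing Implicit Defensive.
Import GRing.Theory.
Local Open Scope ring_scope.

(* Vertices of the 3-regular rooted tree T_3: finite words over the alphabet
   {1,2,3}, encoded as 'Z_3 = {0,1,2} (letter i+1 is encoded by i). *)
Definition vtx := seq 'Z_3.

(* Automorphisms are represented as functions vtx -> vtx; products are
   compositions with LEFT actions: (g h) w = g (h w). *)
Definition fid : vtx -> vtx := fun w => w.
Definition prodw (fs : seq (vtx -> vtx)) : vtx -> vtx :=
  foldr (fun f acc => f \o acc) fid fs.

(* The group A = <a>, a = (1 2 3): the element a^k (k : 'Z_3) is the rooted
   automorphism x w |-> (x + k) w. *)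
Definition apow (k : 'Z_3) (w : vtx) : vtx :=
  if w is x :: w' then (x + k) :: w' else [::].

(* b^{a^i} = a^i b a^{-i} *)
Definition conjA (i : 'Z_3) (f : vtx -> vtx) : vtx -> vtx :=
  apow i \o f \o apow (- i).

(* B = (Z/3Z)^m, written additively as row vectors.  A sequence
   omega = omega_0 omega_1 ... of maps B -> A is encoded as
   omega : nat -> B -> 'Z_3, where the value k stands for a^k. *)
Definition Bm (m : nat) := 'rV['Z_3]_m.
Definition seqom (m : nat) := nat -> Bm m -> 'Z_3.

Definition shift m (om : seqom m) : seqom m := fun i => om i.+1.

(* beta_omega(b) = (omega_0(b), 1, beta_{sigma omega}(b)) *)
Fixpoint beta m (om : seqom m) (b : Bm m) (w : vtx) {struct w} : vtx :=
  match w with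
  | [::] => [::]
  | y :: w' =>
      if y == 0 then y :: apow (om 0%N b) w'
      else if y == 1 then y :: w'
      else y :: beta (shift om) b w'
  end.

(* Generators of G_omega = <A, B_omega>: elements of A (inl k = a^k) and
   elements of B_omega (inr b = beta_omega(b)). *)
Definition gen m := ('Z_3 + Bm m)%type.

Definition evalgen m (om : seqom m) (x : gen m) : vtx -> vtx :=
  match x with inl k => apow k | inr b => beta om b end.

Definition evalw m (om : seqom m) (l : seq (gen m)) : vtx -> vtx :=
  prodw (map (evalgen om) l).

Definition gencost m (om : seqom m) (x : gen m) : nat :=
  match x with
  | inl _ => 0%N
  | inr b => if excluded_middle_informative (beta om b =1 fid) then 0%N else 1%N
  end.

Definition costw m (om : seqom m) (l : seq (gen m)) : nat :=
  sumn (map (gencost om) l).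

Definition inG m (om : seqom m) (g : vtx -> vtx) : Prop :=
  exists l, evalw om l =1 g.

Definition wnorm m (om : seqom m) (g : vtx -> vtx) (n : nat) : Prop :=
  (exists l, evalw om l =1 g /\ costw om l = n) /\
  (forall l, evalw om l =1 g -> (n <= costw om l)%N).

(* Incompressible elements I_k^omega.  g = (g_1,g_2,g_3) tau means
   g (x w) = tau(x) g_{tau(x)}(w). *)
Fixpoint Icomp m (k : nat) (om : seqom m) (g : vtx -> vtx) : Prop :=
  match k with
  | 0%N => inG om g
  | k'.+1 =>
      inG om g /\
      exists (gs : 'Z_3 -> vtx -> vtx) (tau : {perm 'Z_3})
             (ns : 'Z_3 -> nat) (n : nat),
        (forall x w, g (x :: w) = tau x :: gs (tau x) w) /\
        (forall i, Icomp k' (shift om) (gs i)) /\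
        (forall i, wnorm (shift om) (gs i) (ns i)) /\
        wnorm om g n /\
        (\sum_(i : 'Z_3) ns i)%N = n
  end.

Definition Iinf m (om : seqom m) (g : vtx -> vtx) : Prop :=
  forall k, (1 <= k)%N -> Icomp k om g.

(* Main.v *)
Require Import Defs.
From mathcomp Require Import all_boot all_order all_algebra all_fingroup.
From mathcomp Require Import zify.
Import GRing.Theory.
Local Open Scope ring_scope.

Lemma evalw_cat m (om : seqom m) l1 l2 w :
  evalw om (l1 ++ l2) w = evalw om l1 (evalw om l2 w).
Proof. by elim: l1 => //= x l1 IH; rewrite /evalw /= in IH *; rewrite IH. Qed.

Lemma costw_cat m (om : seqom m) l1 l2 :
  costw om (l1 ++ l2) = (costw om l1 + costw om l2)%N.
Proof. by rewrite /costw map_cat sumn_cat. Qed.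

Lemma apowD (a b : 'Z_3) w : apow a (apow b w) = apow (b + a) w.
Proof. by case: w => //= x w; rewrite addrA. Qed.

Lemma beta_add m (om : seqom m)
  (hom : forall i x y, om i (x + y) = om i x + om i y) x y w :
  beta om (x + y) w = beta om x (beta om y w).
Proof.
elim: w om hom => //= z w IH om hom.
case: ifP => [z0|nz0]; first by rewrite /= z0 apowD hom addrC.
case: ifP => z1; rewrite /= ?nz0 ?z1 //.
by rewrite IH // => i; exact: hom.
Qed.
Definition sw m (om : seqom m) (b : nat -> Bm m) (c : nat -> 'Z_3)
  (p : 'Z_3) (i : nat) : seq (gen m) :=
  if p - c i == 0 then [:: inl (om 0%N (b i))]
  else if p - c i == 1 then [::] else [:: inr (b i)].

Lemma conj_sec m om b c p i w :
  conjA (c i) (beta om (b i)) (p :: w) = p :: evalw (shift om) (@sw m om b c p i) w.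
Proof.
rewrite /conjA /sw /=.
by case: ifP => _; [|case: ifP => _]; rewrite /= subrK.
Qed.

Lemma prod_sec m om b c p l w :
  prodw [seq conjA (c i) (beta om (b i)) | i <- l] (p :: w) =
  p :: evalw (shift om) (flatten [seq @sw m om b c p i | i <- l]) w.
Proof.
elim: l => //= i l IH.
by rewrite IH conj_sec evalw_cat.
Qed.

Lemma costw_flatten m om (f : nat -> seq (gen m)) l :
  costw om (flatten (map f l)) = (\sum_(i <- l) costw om (f i))%N.
Proof. by elim: l => [|i l IH]; rewrite ?big_nil ?big_cons //= costw_cat IH. Qed.

Lemma z3 (y : 'Z_3) : y != 0 -> y = 1 \/ y = 2.
Proof. by case: y => -[|[|[|]]] //= ?; [left|right]; apply/val_inj. Qed.

Lemma sum_sw m om b c i :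
  (\sum_(p : 'Z_3) costw (shift om) (@sw m om b c p i))%N = gencost (shift om) (inr (b i)).
Proof.
rewrite (bigD1 (c i + 2)) //= big1 ?addn0.
  by rewrite /sw (addrC (c i)) addrK /costw /= addn0.
move=> p pn; rewrite /sw.
case: ifP => // h0; case: ifP => // h1.
have [e1|e2] := z3 _ (negbT h0); first by rewrite e1 in h1.
by move: pn; rewrite -e2 addrC subrK eqxx.
Qed.

Lemma sum_le1 (e : nat -> nat) (l : seq nat) :
  (forall i, e i <= 1)%N -> (\sum_(i <- l) e i <= size l)%N.
Proof.
move=> le1; elim: l => [|y l IHl]; rewrite ?big_nil ?big_cons //=.
by rewrite -addn1 addnC leq_add.
Qed.

Lemma sum_lt1 (e : nat -> nat) (l : seq nat) x :
  (forall i, e i <= 1)%N -> x \in l -> e x = 0%N -> (\sum_(i <- l) e i < size l)%N.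
Proof.
move=> le1; elim: l => //= a l IH; rewrite in_cons big_cons.
case/orP => [/eqP -> ->|xl ex]; first by rewrite add0n ltnS sum_le1.
by have := IH xl ex; have := le1 a; lia.
Qed.

Lemma gencost_le1 m om x : (@gencost m om x <= 1)%N.
Proof. by case: x => //= y; case: ClassicalEpsilon.excluded_middle_informative. Qed.

Lemma wnorm_uniq m om f n1 n2 : @wnorm m om f n1 -> wnorm om f n2 -> n1 = n2.
Proof.
move=> [[l1 [E1 C1]] H1] [[l2 [E2 C2]] H2].
apply/eqP; rewrite eqn_leq; apply/andP; split.
  by rewrite -C2; apply: H1.
by rewrite -C1; apply: H2.
Qed.

Lemma iota_split n k : (1 <= k)%N -> (k <= n)%N ->
  iota 1 n = iota 1 k.-1 ++ iota k (n - k.-1).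
Proof.
move=> k1 kn; transitivity (iota 1 (k.-1 + (n - k.-1))); first by congr iota; lia.
by rewrite iotaD; congr (_ ++ iota _ _); lia.
Qed.

Lemma z3a (x : 'Z_3) : x + 2 - (x + 1) = 1.
Proof. by rewrite opprD addrACA subrr add0r; apply/val_inj. Qed.

Theorem mainTheorem3 (m : nat) (om : seqom m)
  (om_morph : forall i (x y : Bm m), om i (x + y) = om i x + om i y)
  (om_surj : forall i (z : 'Z_3), exists x : Bm m, om i x = z)
  (om_ker : forall (k : nat) (x : Bm m),
      (forall i : nat, (k <= i)%N -> om i x = 0) -> x = 0)
  (g : vtx -> vtx) (n : nat) (gG : inG om g) (gn : wnorm om g n)
  (n_ge1 : (1 <= n)%N)
  (s : 'Z_3) (b : nat -> Bm m) (c : nat -> 'Z_3)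
  (g_dec : g =1 prodw [seq conjA (c i) (beta om (b i)) | i <- iota 1 n] \o apow s)
  (g_inf : Iinf om g) :
  exists mc : nat, (1 <= mc <= n)%N /\
    forall k : nat, (1 <= k <= n.-1)%N ->
      ((k < mc)%N -> c k.+1 - c k = 2) /\ ((mc <= k)%N -> c k.+1 - c k = 1).
Proof.
pose L := iota 1 n.
pose W p := flatten [seq sw m om b c p i | i <- L].
pose e i := gencost (shift om) (inr (b i)).
have gsec : forall x w, g (x :: w) = (x + s) :: evalw (shift om) (W (x + s)) w.
  by move=> x w; rewrite g_dec /= prod_sec.
have [_ [gs [tau [ns [n0 [Hgs [_ [Hns [Hn0 Hsum]]]]]]]]] := g_inf 1%N (leqnn 1).
have n0n : n0 = n by apply: wnorm_uniq Hn0 gn.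
subst n0.
have gsW : forall p, evalw (shift om) (W p) =1 gs p.
  move=> p w; have := Hgs (p - s) w; rewrite gsec subrK.
  by case=> tx ->; rewrite -tx.
have nsle : forall p, (ns p <= costw (shift om) (W p))%N.
  by move=> p; apply: (Hns p).2; apply: gsW.
have sumW : (\sum_(p : 'Z_3) costw (shift om) (W p) = \sum_(i <- L) e i)%N.
  rewrite (eq_bigr (fun p => \sum_(i <- L) costw (shift om) (sw m om b c p i))%N); last first.
    by move=> p _; rewrite /W (costw_flatten _ _ (sw m om b c p)).
  rewrite exchange_big /=; apply: eq_bigr => i _.
  exact: sum_sw.
have sizeL : size L = n by rewrite size_iota.
have sumge : (n <= \sum_(i <- L) e i)%N.
  by rewrite -sumW -{1}n0n; apply: leq_sum => p _; apply: nsle.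
have e1 : forall i, i \in L -> e i = 1%N.
  move=> i iL; have h1 : (e i <= 1)%N := gencost_le1 _ _ _.
  case ei: (e i) h1 => [|[|//]] // _.
  have := sum_lt1 e L i (fun j => gencost_le1 _ _ _) iL ei; rewrite sizeL; lia.
have nobad : forall p0 l1 k mid j l2, L = l1 ++ k :: mid ++ j :: l2 ->
    flatten [seq sw m om b c p0 i | i <- mid] = [::] ->
    sw m om b c p0 k = [:: inr (b k)] -> sw m om b c p0 j = [:: inr (b j)] -> False.
  move=> p0 l1 k mid j l2 EL Emid Ek Ej.
  have kL : k \in L by rewrite EL mem_cat in_cons eqxx orbT.
  have jL : j \in L by rewrite EL mem_cat in_cons mem_cat in_cons eqxx !orbT.
  pose W' := flatten [seq sw m om b c p0 i | i <- l1] ++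
             inr (b k + b j) :: flatten [seq sw m om b c p0 i | i <- l2].
  have EW : W p0 = flatten [seq sw m om b c p0 i | i <- l1] ++
             [:: inr (b k), inr (b j) & flatten [seq sw m om b c p0 i | i <- l2]].
    by rewrite /W EL map_cat flatten_cat /= map_cat flatten_cat /= Ek Ej Emid.
  have evW' : evalw (shift om) W' =1 gs p0.
    move=> w; rewrite -gsW EW /W' !evalw_cat /=.
    by rewrite /evalw /= beta_add // => i; apply: om_morph.
  have cW' : (costw (shift om) W' < costw (shift om) (W p0))%N.
    rewrite EW /W' !costw_cat.
    have := gencost_le1 _ (shift om) (inr (b k + b j)).
    have := e1 _ kL; have := e1 _ jL; rewrite /e /costw /=; lia.
  have ns0 : (ns p0 < costw (shift om) (W p0))%N.
    by apply: leq_ltn_trans cW'; apply: (Hns p0).2.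
  have : (\sum_(p : 'Z_3) ns p < \sum_(p : 'Z_3) costw (shift om) (W p))%N.
    rewrite (bigD1 p0) //= [X in (_ < X)%N](bigD1 p0) //=.
    rewrite -addSn; apply: leq_add => //; apply: leq_sum => p _; apply: nsle.
  rewrite n0n sumW; move: (sum_le1 e L (fun j => gencost_le1 _ _ _)).
  rewrite sizeL /e; lia.
have dnz : forall k, (1 <= k)%N -> (k < n)%N -> c k.+1 != c k.
  move=> k k1 kn; apply/eqP => Ec.
  apply: (nobad (c k + 2) (iota 1 k.-1) k [::] k.+1 (iota k.+2 (n - k.+1))).
  - rewrite /L (@iota_split n k k1 (ltnW kn)).
    by have -> : (n - k.-1 = (n - k.+1).+2)%N by lia.
  - by [].
  - by rewrite /sw (addrC (c k)) addrK.
  - by rewrite /sw Ec (addrC (c k)) addrK.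
have no12 : forall k, (1 <= k)%N -> (k.+2 <= n)%N ->
    c k.+1 = c k + 1 -> c k.+2 = c k -> False.
  move=> k k1 kn E1 E2.
  apply: (nobad (c k + 2) (iota 1 k.-1) k [:: k.+1] k.+2 (iota k.+3 (n - k.+2))).
  - rewrite /L (@iota_split n k k1 (leq_trans (leqnSn _) (ltnW kn))).
    by have -> : (n - k.-1 = (n - k.+2).+3)%N by lia.
  - by rewrite /= /sw E1 z3a.
  - by rewrite /sw (addrC (c k)) addrK.
  - by rewrite /sw E2 (addrC (c k)) addrK.
have d2 : forall k, (1 <= k)%N -> (k < n)%N -> c k.+1 - c k != 1 -> c k.+1 - c k = 2.
  move=> k k1 kn ne1; have : c k.+1 - c k != 0 by rewrite subr_eq0; apply: dnz.
  by case/z3 => // E; rewrite E eqxx in ne1.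
have d11 : forall k, (1 <= k)%N -> (k.+2 <= n)%N -> c k.+1 - c k = 1 ->
    c k.+2 - c k.+1 = 1.
  move=> k k1 kn E1; case: (boolP (c k.+2 - c k.+1 == 1)) => [/eqP //|ne1].
  have E2 := d2 k.+1 (leq_trans k1 (leqnSn _)) kn ne1.
  exfalso; apply: (no12 k k1 kn).
    by move/eqP: E1; rewrite subr_eq addrC => /eqP.
  move/eqP: E2; rewrite subr_eq => /eqP ->.
  move/eqP: E1; rewrite subr_eq => /eqP ->.
  by rewrite addrA [2 + 1](_ : _ = 0) ?add0r //; apply/val_inj.
pose P k := [&& (1 <= k)%N, (k < n)%N & (c k.+1 - c k == 1)] || (k == n).
have exP : exists k, P k by exists n; rewrite /P eqxx orbT.
case: (ex_minnP exP) => mc Pmc minmc.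
have mcn : (mc <= n)%N by apply: minmc; rewrite /P eqxx orbT.
exists mc; split.
  apply/andP; split => //; move: Pmc; rewrite /P.
  by case/orP => [/and3P[]|/eqP ->].
move=> k /andP[k1 kn]; have kn' : (k < n)%N by lia.
split.
  move=> kmc; apply: d2 => //; apply/negP => /eqP E.
  have : (mc <= k)%N by apply: minmc; rewrite /P k1 kn' E eqxx.
  by rewrite leqNgt kmc.
move=> mck.
have Pm : [&& (1 <= mc)%N, (mc < n)%N & (c mc.+1 - c mc == 1)].
  move: Pmc; rewrite /P; case/orP => // /eqP E; exfalso; lia.
case/and3P: Pm => m1 mn /eqP Em.
have : forall k, (mc <= k)%N -> (k < n)%N -> c k.+1 - c k = 1.
  elim=> [|k' IH]; first by move=> h; exfalso; lia.
  move=> h1 h2; case: (boolP (mc == k'.+1)) => [/eqP <- //|ne].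
  apply: d11; [lia|lia|apply: IH; lia].
by move=> /(_ k mck kn').
Qed.
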